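(* Let $\mathcal{X},\mathcal{Y}$ be finite sets and $p(X,Y)$ a distribution on $\mathcal{X}\times\mathcal{Y}$ with fully supported marginals. If $q\in C(\mathcal{X}\times\mathcal{Y},\mathcal{T})$ solves the IIB problem with parameter $\lambda=D(p(X,Y)\|p(X)p(Y))$, then for all $(x,y)\in\mathcal{S}$ and $t\in\mathcal{T}$, $$q(t|x,y)=\sum_{j=1}^n q(t|\mathcal{T}^q_j)\,\delta_{(x,y)\in\mathcal{S}_j}.$$
   Context: $\mathcal{T}:=\mathbb{N}$; $C(\mathcal{A},\mathcal{B})$ is the set of channels from $\mathcal{A}$ to $\mathcal{B}$. For $\kappa\in C(\mathcal{X}\times\mathcal{Y},\mathcal{T})$ and a distribution $r$ on $\mathcal{X}\times\mathcal{Y}$, $\kappa(r)(t)=\sum_{x,y}\kappa(t|x,y)r(x,y)$; $I_\kappa(X,Y;T)$ is the mutual information under $p(x,y)\kappa(t|x,y)$; $D$ is KL divergence. IIB problem with parameter $\lambda$: minimise $I_\kappa(X,Y;T)$ over $\kappa\in C(\mathcal{X}\times\mathcal{Y},\mathcal{T})$ subject to $D(\kappa(p(X,Y))\|\kappa(p(X)p(Y)))=\lambda$. $q(t)=\sum_{x,y}p(x,y)q(t|x,y)$, $q(A)=\sum_{t\in A}q(t)$, $q(t|A)=\frac{q(t)}{q(A)}\delta_{t\in A}$. $\mathcal{S}=\operatorname{supp}p(X,Y)$; $(x,y)\sim(x',y')$ iff $\frac{p(x,y)}{p(x)p(y)}=\frac{p(x',y')}{p(x')p(y')}$, whose classes contained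 in $\mathcal{S}$ are $\mathcal{S}_1,\dots,\mathcal{S}_n$. $\mathcal{T}^q_j:=\{t\in\mathcal{T}:\exists(x,y)\in\mathcal{S}_j,\ q(t|x,y)>0\}$. *)

(* Defs.v *)
From HB Require Import structures.
From mathcomp Require Import all_boot all_order all_algebra.
From mathcomp Require Import all_classical all_reals.
From mathcomp Require Import all_analysis.
Set Implicit Arguments. Unset Strict Implicit. Unset Printing Implicit Defensive.
Import Order.TTheory GRing.Theory Num.Theory.
Local Open Scope classical_set_scope.
Local Open Scope ring_scope.

Section IIB.
Variables (R : realType) (X Y : finType).

Definition is_distr (p : X * Y -> R) : Prop :=
  (forall z, 0 <= p z) /\ \sum_(z : X * Y) p z = 1.

Definition margX (p : X * Y -> R) (x : X) : R := \sum_(y : Y) p (x, y).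
Definition margY (p : X * Y -> R) (y : Y) : R := \sum_(x : X) p (x, y).
Definition prodmarg (p : X * Y -> R) (z : X * Y) : R := margX p z.1 * margY p z.2.

(* channels from X * Y to T := nat : kappa z t = kappa(t|z) *)
Definition is_channel (k : X * Y -> nat -> R) : Prop :=
  (forall z t, 0 <= k z t) /\ (forall z, (\sum_(t <oo) (k z t)%:E)%E = 1%E).

Definition chan_out (k : X * Y -> nat -> R) (r : X * Y -> R) (t : nat) : R :=
  \sum_(z : X * Y) k z t * r z.

Definition kl_term (a b : R) : \bar R :=
  if a == 0 then 0%E else if b == 0 then +oo%E else (a * ln (a / b))%:E.

Definition epos (e : \bar R) : \bar R := maxe e 0%E.
Definition eneg (e : \bar R) : \bar R := maxe (- e)%E 0%E.

Definition KLfin (P Q : X * Y -> R) : \bar R :=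
  (\sum_(z : X * Y) kl_term (P z) (Q z))%E.

(* KL divergence of two distributions on T = nat: integral of the integrand
   w.r.t. counting measure = (sum of positive parts) - (sum of negative parts) *)
Definition KLnat (P Q : nat -> R) : \bar R :=
  ((\sum_(t <oo) epos (kl_term (P t) (Q t)))
   - (\sum_(t <oo) eneg (kl_term (P t) (Q t))))%E.

Definition KLprod (P Q : X * Y -> nat -> R) : \bar R :=
  ((\sum_(t <oo) \sum_(z : X * Y) epos (kl_term (P z t) (Q z t)))
   - (\sum_(t <oo) \sum_(z : X * Y) eneg (kl_term (P z t) (Q z t))))%E.

Definition MI (p : X * Y -> R) (k : X * Y -> nat -> R) : \bar R :=
  KLprod (fun z t => p z * k z t) (fun z t => p z * chan_out k p t).

Definition IIB_constraint (p : X * Y -> R) (k : X * Y -> nat -> R) : \bar R :=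
  KLnat (chan_out k p) (chan_out k (prodmarg p)).

Definition IIB_solution (p : X * Y -> R) (lambda : \bar R)
    (q : X * Y -> nat -> R) : Prop :=
  [/\ is_channel q, IIB_constraint p q = lambda &
      forall k, is_channel k -> IIB_constraint p k = lambda ->
        (MI p q <= MI p k)%E].

Definition supp (p : X * Y -> R) : {set X * Y} := [set z | p z != 0].

Definition pmi_ratio (p : X * Y -> R) (z : X * Y) : R := p z / prodmarg p z.

Definition eq_class (p : X * Y -> R) (z : X * Y) : {set X * Y} :=
  [set z' | pmi_ratio p z' == pmi_ratio p z].

Definition classes_in_S (p : X * Y -> R) : {set {set X * Y}} :=
  [set C in [set eq_class p z | z in [set: X * Y]] | C \subset supp p].

Definition qT (p : X * Y -> R) (q : X * Y -> nat -> R) (t : nat) : R :=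
  \sum_(z : X * Y) p z * q z t.

Definition qmass (p : X * Y -> R) (q : X * Y -> nat -> R) (A : set nat) : R :=
  fine (\sum_(t <oo) ((qT p q t) * \1_A t)%:E)%E.

Definition qcond (p : X * Y -> R) (q : X * Y -> nat -> R) (A : set nat)
    (t : nat) : R :=
  qT p q t / qmass p q A * \1_A t.

Definition Tq (q : X * Y -> nat -> R) (C : {set X * Y}) : set nat :=
  [set t | exists2 z, z \in C & 0 < q z t].

End IIB.

(* Main.v *)
Require Import Defs.
From HB Require Import structures.
From mathcomp Require Import all_boot all_order all_algebra.
From mathcomp Require Import all_classical all_reals.
From mathcomp Require Import all_analysis.
From mathcomp Require Import ring lra.
Import Order.TTheory GRing.Theory Num.Theory.
Set Implicit Arguments. Unset Strict Implicit.
Local Open Scope ring_scope.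

Section Aux.
Variable R : realType.

Lemma L1 (a b : R) : 0 < a -> 0 < b ->
  a - b <= a * (ln a - ln b) /\ (a - b = a * (ln a - ln b) -> a = b).
Proof.
move=> a0 b0.
have e : expR (ln b - ln a) = b / a.
  by rewrite -ln_div ?posrE // lnK // posrE divr_gt0.
have ea : a * (b / a) = b by rewrite mulrCA divff ?gt_eqF // mulr1.
split.
  have h1 := expR_ge1Dx (ln b - ln a); rewrite e in h1.
  have : a * (1 + (ln b - ln a)) <= a * (b/a) by rewrite ler_pM2l.
  rewrite ea => h; nra.
move=> eq.
have h0 : ln b - ln a = 0.
  apply/eqP; apply: contraT => ne.
  have := expR_gt1Dx ne; rewrite e => h2.
  have : a * (1 + (ln b - ln a)) < a * (b/a) by rewrite ltr_pM2l.
  rewrite ea => h; nra.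
move: e; rewrite h0 expR0 => e.
by rewrite -ea -e mulr1.
Qed.

Lemma logsum (I : finType) (a b : I -> R) :
  (forall i, 0 <= a i) -> (forall i, 0 <= b i) -> (forall i, b i = 0 -> a i = 0) ->
  (\sum_i a i) * ln ((\sum_i a i) / (\sum_i b i)) <= \sum_i a i * ln (a i / b i) /\
  ((\sum_i a i) * ln ((\sum_i a i) / (\sum_i b i)) = \sum_i a i * ln (a i / b i) ->
     forall i, a i * (\sum_i b i) = (\sum_i a i) * b i).
Proof.
move=> a0 b0 ba.
set A := \sum_i a i; set B := \sum_i b i.
have A0 : 0 <= A by apply: sumr_ge0.
have B0 : 0 <= B by apply: sumr_ge0.
have [Ae|An] := eqVneq A 0.
  have az : forall i, a i = 0 by move=> i; apply: (psumr_eq0P _ Ae).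
  rewrite Ae mul0r big1 => [|i _]; last by rewrite az mul0r.
  by split => // _ i; rewrite az mul0r mul0r.
have Ap : 0 < A by rewrite lt_neqAle eq_sym An A0.
have Bp : 0 < B.
  rewrite lt_neqAle eq_sym B0 andbT; apply/eqP => Be.
  have bz : forall i, b i = 0 by move=> i; apply: (psumr_eq0P _ Be).
  by move/eqP: An; apply; apply: big1 => i _; apply: ba.
pose f i := a i * ln (a i / b i) - a i * ln (A / B) - (a i - b i * (A / B)).
have fsum : \sum_i f i = \sum_i a i * ln (a i / b i) - A * ln (A / B).
  rewrite /f !sumrB -!mulr_suml -/A -/B.
  have -> : B * (A / B) = A by rewrite mulrCA divff ?gt_eqF // mulr1.
  by rewrite subrr subr0.
have fge : forall i, 0 <= f i /\ (f i = 0 -> a i * B = A * b i).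
  move=> i; have [ai0|ain] := eqVneq (a i) 0.
    rewrite /f ai0 !mul0r ?subr0 ?sub0r ?opprK ?subr0 ?sub0r ?opprK; rewrite ?subr0 ?sub0r ?opprK.
    split; first by rewrite mulr_ge0 // divr_ge0 // ltW.
    move/eqP; rewrite mulf_eq0 => /orP[/eqP->|]; first by rewrite mulr0.
    by rewrite mulf_eq0 invr_eq0 (negbTE An) gt_eqF.
  have aip : 0 < a i by rewrite lt_neqAle eq_sym ain a0.
  have bip : 0 < b i.
    rewrite lt_neqAle eq_sym b0 andbT; apply/eqP => /ba /eqP; exact/negP.
  have xp : 0 < a i * B by rewrite mulr_gt0.
  have yp : 0 < b i * A by rewrite mulr_gt0.
  have [h1 h2] := L1 xp yp.
  have fB : f i * B = a i * B * (ln (a i * B) - ln (b i * A)) - (a i * B - b i * A).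
    rewrite /f !ln_div ?posrE // !lnM ?posrE //.
    field; by rewrite gt_eqF.
  split.
    by rewrite -(pmulr_lge0 _ Bp) fB subr_ge0.
  move=> fi0; rewrite [A * _]mulrC h2 //.
  by apply/eqP; rewrite eq_sym -subr_eq0 -fB fi0 mul0r.
split.
  by rewrite -subr_ge0 -fsum; apply: sumr_ge0 => i _; case: (fge i).
move=> eq i; apply: (proj2 (fge i)).
apply: (psumr_eq0P (P := predT)) => // [j _|]; first by case: (fge j).
by rewrite fsum eq subrr.
Qed.
End Aux.

Section Ser.
Variable R : realType.
Local Open Scope ereal_scope.

Lemma ser_ge0 (f : nat -> R) : (forall t, 0 <= f t)%R -> 0 <= \sum_(t <oo) (f t)%:E.
Proof. by move=> f0; apply: nneseries_ge0 => n _ _; rewrite lee_fin. Qed.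

Lemma ser_fin (f : nat -> R) : (forall t, 0 <= f t)%R -> \sum_(t <oo) (f t)%:E < +oo ->
  exists r, \sum_(t <oo) (f t)%:E = r%:E.
Proof.
move=> f0; case E: (\sum_(t <oo) (f t)%:E) => [r| |] //; first by exists r.
by have := ser_ge0 f0; rewrite E.
Qed.

Lemma ser_term (f : nat -> R) t : (forall t, 0 <= f t)%R -> (f t)%:E <= \sum_(t <oo) (f t)%:E.
Proof.
move=> f0; apply: le_trans (@nneseries_lim_ge _ _ _ 0 t.+1 _); last by move=> n _ _; rewrite lee_fin.
rewrite big_nat_recr //= leeDr // sume_ge0 // => i _; by rewrite lee_fin.
Qed.

Lemma serD (f g : nat -> R) : (forall t, 0 <= f t)%R -> (forall t, 0 <= g t)%R ->
  \sum_(t <oo) (f t + g t)%:E = \sum_(t <oo) (f t)%:E + \sum_(t <oo) (g t)%:E.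
Proof.
move=> f0 g0; rewrite -nneseriesD //; last by move=> i _ _; rewrite lee_fin.
  by move=> i _ _; rewrite lee_fin.
Qed.

Lemma key (al be ga de : nat -> R) :
  (forall t, 0 <= al t)%R -> (forall t, 0 <= be t)%R ->
  (forall t, 0 <= ga t)%R -> (forall t, 0 <= de t)%R ->
  (forall t, ga t - de t <= al t - be t)%R ->
  \sum_(t <oo) (be t)%:E < +oo -> \sum_(t <oo) (ga t)%:E < +oo ->
  \sum_(t <oo) (de t)%:E < +oo ->
  \sum_(t <oo) (al t)%:E - \sum_(t <oo) (be t)%:E <=
  \sum_(t <oo) (ga t)%:E - \sum_(t <oo) (de t)%:E ->
  forall t, (ga t - de t = al t - be t)%R.
Proof.
move=> a0 b0 g0 d0 le bf gf df hle.
have [sb Eb] := ser_fin b0 bf; have [sg Eg] := ser_fin g0 gf; have [sd Ed] := ser_fin d0 df.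
rewrite Eb Eg Ed in hle.
have [sa Ea] : exists r, \sum_(t <oo) (al t)%:E = r%:E.
  apply: ser_fin => //; move: hle; case: (\sum_(t <oo) (al t)%:E) => // r _; exact: ltry.
pose w t := (al t + de t - be t - ga t)%R.
have w0 : forall t, (0 <= w t)%R by move=> t; rewrite /w; have := le t; lra.
have e1 : \sum_(t <oo) (al t + de t)%:E = \sum_(t <oo) (w t + (be t + ga t))%:E.
  by apply: eq_eseriesr => t _; congr (_%:E); rewrite /w; ring.
have bg0 : forall t, (0 <= be t + ga t)%R by move=> t; rewrite addr_ge0.
have {}e1 : \sum_(t <oo) (al t)%:E + \sum_(t <oo) (de t)%:E =
   \sum_(t <oo) (w t)%:E + (\sum_(t <oo) (be t)%:E + \sum_(t <oo) (ga t)%:E).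
  by rewrite -(serD a0 d0) e1 (serD w0 bg0) (serD b0 g0).
rewrite Ea Eb Eg Ed in e1.
have [sw Ew] : exists r, \sum_(t <oo) (w t)%:E = r%:E.
  apply: ser_fin => //; case E: (\sum_(t <oo) (w t)%:E) => [r| |]; first exact: ltry.
    by move: e1; rewrite E -EFinD -EFinD addye.
  by have := ser_ge0 w0; rewrite E.
rewrite Ew in e1; move: e1 => /eqP; rewrite -!EFinD eqe => /eqP e1.
rewrite Ea -!EFinB lee_fin in hle.
move=> t; have := ser_term t w0; rewrite Ew lee_fin => wt.
have := w0 t; rewrite /w in wt *; lra.
Qed.

Definition klr (a b : R) := (a * ln (a / b))%R.

Lemma chanE (I : finType) (k : I -> nat -> R) (c : I -> R) :
  (forall i t, 0 <= k i t)%R -> (forall i, \sum_(t <oo) (k i t)%:E = 1) ->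
  (forall i, 0 <= c i)%R ->
  \sum_(t <oo) (\sum_i c i * k i t)%:E = (\sum_i c i)%:E.
Proof.
move=> k0 k1 c0.
under eq_eseriesr do rewrite -sumEFin.
rewrite nneseries_sum; last by move=> i j _; rewrite lee_fin mulr_ge0.
rewrite -sumEFin; apply: eq_bigr => i _.
under eq_eseriesr do rewrite EFinM.
by rewrite nneseriesZl ?k1 ?mule1 // => t _; rewrite lee_fin.
Qed.

Lemma chan_bound (I : finType) (k : I -> nat -> R) (c : I -> R) (f : nat -> R) :
  (forall i t, 0 <= k i t)%R -> (forall i, \sum_(t <oo) (k i t)%:E = 1) ->
  (forall i, 0 <= c i)%R -> (forall t, 0 <= f t)%R ->
  (forall t, f t <= \sum_i c i * k i t)%R ->
  \sum_(t <oo) (f t)%:E < +oo.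
Proof.
move=> k0 k1 c0 f0 fle.
apply: (le_lt_trans (lee_nneseries (v := fun t => (\sum_i c i * k i t)%:E) _ _)).
- by move=> i _ _; rewrite lee_fin.
- by move=> n _; rewrite lee_fin.
by rewrite chanE // ltry.
Qed.

Lemma maxpos (x : R) : (Num.max x 0%R - Num.max (- x) 0%R = x)%R.
Proof.
rewrite /Order.max /=; case: (ltP x 0%R); case: (ltP (- x)%R 0%R) => /= *; lra.
Qed.

Lemma maxpos_ge0 (x : R) : (0 <= Num.max x 0%R)%R.
Proof. by rewrite le_max lexx orbT. Qed.

Lemma kl_termE (a b : R) : (a != 0 -> b != 0)%R -> kl_term a b = (klr a b)%:E.
Proof.
rewrite /kl_term /klr; have [->|an] := eqVneq a 0%R; first by rewrite mul0r.
by move=> /(_ isT) /negbTE ->.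
Qed.

Lemma eposE (x : R) : epos x%:E = (Num.max x 0%R)%:E.
Proof. by rewrite /epos EFin_max. Qed.
Lemma enegE (x : R) : eneg x%:E = (Num.max (- x) 0)%:E%R.
Proof. by rewrite /eneg EFin_max. Qed.

Lemma KLprodE (X Y : finType) (P Q : X * Y -> nat -> R) :
  (forall z t, P z t != 0 -> Q z t != 0)%R ->
  KLprod P Q = \sum_(t <oo) (\sum_z Num.max (klr (P z t) (Q z t)) 0%R)%:E -
               \sum_(t <oo) (\sum_z Num.max (- klr (P z t) (Q z t)) 0%R)%:E.
Proof.
move=> h; rewrite /KLprod; congr (_ - _); apply: eq_eseriesr => t _;
  rewrite -sumEFin; apply: eq_bigr => z _; rewrite (kl_termE (h z t)).
  by rewrite eposE.
by rewrite enegE.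
Qed.

Lemma KLnatE (P Q : nat -> R) :
  (forall t, P t != 0 -> Q t != 0)%R ->
  KLnat P Q = \sum_(t <oo) (Num.max (klr (P t) (Q t)) 0%R)%:E -
               \sum_(t <oo) (Num.max (- klr (P t) (Q t)) 0%R)%:E.
Proof.
move=> h; rewrite /KLnat; congr (_ - _); apply: eq_eseriesr => t _;
  rewrite (kl_termE (h t)).
  by rewrite eposE.
by rewrite enegE.
Qed.

Lemma KLfinE (X Y : finType) (P Q : X * Y -> R) :
  (forall z, Q z != 0)%R -> KLfin P Q = (\sum_z klr (P z) (Q z))%:E.
Proof.
move=> h; rewrite /KLfin -sumEFin; apply: eq_bigr => z _; rewrite kl_termE //.
Qed.

Lemma fin_diff (G D : \bar R) (x : R) : 0 <= G -> 0 <= D -> G - D = x%:E ->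
  G < +oo /\ D < +oo.
Proof. by case: G => [g| |]; case: D => [d| |] //= _ _ _; rewrite !ltry. Qed.

End Ser.

Section Real2.
Variable R : realType.

Lemma klr_scale (a s b : R) : klr (a * s) (a * b) = a * klr s b.
Proof.
rewrite /klr; have [->|an] := eqVneq a 0; first by rewrite !mul0r.
by rewrite -mulf_div divff // mul1r mulrA.
Qed.

Lemma klr0 (b : R) : klr 0 b = 0.
Proof. by rewrite /klr mul0r. Qed.

Lemma klr_pos (s b : R) : 0 < s -> 0 < b -> klr s b = s * (ln s - ln b).
Proof. by move=> s0 b0; rewrite /klr ln_div. Qed.

Lemma ln_le (x : R) : 0 < x -> ln x <= x - 1.
Proof.
move=> x0; have := expR_ge1Dx (ln x); rewrite lnK ?posrE // => h; lra.
Qed.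

Lemma gap (s k b : R) : 0 <= s -> 0 <= k -> (k = 0 -> s = 0) -> (0 < k -> 0 < b) ->
  0 <= klr s b - klr k b - (s - k) * (1 + ln (k / b)) /\
  (klr s b - klr k b - (s - k) * (1 + ln (k / b)) = 0 -> s = k).
Proof.
move=> s0 k0 ks kb.
have [ke|kn] := eqVneq k 0.
  rewrite ke (ks ke) klr0 !subr0 mul0r subr0; split => //.
have kp : 0 < k by rewrite lt_neqAle eq_sym kn k0.
have bp := kb kp.
rewrite (klr_pos kp bp) ln_div ?posrE //.
have [se|sn] := eqVneq s 0.
  rewrite se klr0; split; first nra.
  move=> h; exfalso; nra.
have sp : 0 < s by rewrite lt_neqAle eq_sym sn s0.
rewrite (klr_pos sp bp).
have [h1 h2] := L1 sp kp.
have e : s * (ln s - ln b) - k * (ln k - ln b) - (s - k) * (1 + (ln k - ln b)) =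
         s * (ln s - ln k) - (s - k) by ring.
rewrite e; split; first lra.
move=> h; apply: h2; lra.
Qed.

Lemma negklr_le (a b : R) : 0 <= a -> 0 <= b -> (a != 0 -> b != 0) ->
  Num.max (- klr a b) 0 <= b.
Proof.
move=> a0 b0 ab; rewrite ge_max b0 andbT.
have [ae|an] := eqVneq a 0; first by rewrite ae klr0 oppr0.
have ap : 0 < a by rewrite lt_neqAle eq_sym an a0.
have bp : 0 < b by rewrite lt_neqAle eq_sym (ab an) b0.
rewrite klr_pos //; have [h1 _] := L1 ap bp; lra.
Qed.

End Real2.

Section Main.
Variables (R : realType) (X Y : finType) (p : X * Y -> R) (q : X * Y -> nat -> R).
Hypothesis Hp : is_distr p.
Hypothesis HX : forall x, 0 < margX p x.
Hypothesis HY : forall y, 0 < margY p y.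
Hypothesis Hq : is_channel q.

Lemma p_ge0 z : 0 <= p z. Proof. by case: Hp. Qed.
Lemma p_sum : \sum_z p z = 1. Proof. by case: Hp. Qed.
Lemma m_gt0 z : 0 < prodmarg p z. Proof. by rewrite /prodmarg mulr_gt0. Qed.
Lemma m_neq0 z : prodmarg p z != 0. Proof. by rewrite gt_eqF // m_gt0. Qed.
Lemma q_ge0 z t : 0 <= q z t. Proof. by case: Hq. Qed.
Lemma q_sum z : (\sum_(t <oo) (q z t)%:E)%E = 1%E. Proof. by case: Hq. Qed.

Lemma sub_le (I : finType) (P : pred I) (F : I -> R) i :
  (forall j, 0 <= F j) -> P i -> F i <= \sum_(j | P j) F j.
Proof. by move=> F0 Pi; rewrite (bigD1 i) //= lerDl sumr_ge0. Qed.

Lemma subsum_le (I : finType) (P : pred I) (F : I -> R) :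
  (forall j, 0 <= F j) -> \sum_(j | P j) F j <= \sum_j F j.
Proof. by move=> F0; rewrite [X in _ <= X](bigID P) /= lerDl sumr_ge0. Qed.

Lemma r_neq0 z : (pmi_ratio p z != 0) = (p z != 0).
Proof. by rewrite /pmi_ratio mulf_eq0 invr_eq0 (negbTE (m_neq0 z)) orbF. Qed.

Definition C z := eq_class p z.
Lemma inC z z' : (z' \in C z) = (pmi_ratio p z' == pmi_ratio p z).
Proof. by rewrite inE. Qed.
Lemma C_self z : z \in C z. Proof. by rewrite inC. Qed.
Lemma C_sym z z' : (z' \in C z) = (z \in C z'). Proof. by rewrite !inC eq_sym. Qed.
Lemma C_eq z z' : z' \in C z -> C z' = C z.
Proof. by rewrite inC => /eqP h; apply/setP => y; rewrite !inC h. Qed.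
Lemma C_supp z z' : p z != 0 -> z' \in C z -> p z' != 0.
Proof. by rewrite -!r_neq0 inC => h /eqP ->. Qed.

Definition pC z := \sum_(z' in C z) p z'.
Definition AC z t := \sum_(z' in C z) p z' * q z' t.
Definition kb z t := if p z == 0 then q z t else AC z t / pC z.
Definition P t := chan_out q p t.
Definition Q t := chan_out q (prodmarg p) t.

Lemma pC_ge z : p z <= pC z.
Proof. by apply: sub_le; [exact: p_ge0 | exact: C_self]. Qed.
Lemma pC_gt0 z : p z != 0 -> 0 < pC z.
Proof.
move=> pz; apply: lt_le_trans (pC_ge z).
by rewrite lt_neqAle eq_sym pz p_ge0.
Qed.
Lemma AC_ge0 z t : 0 <= AC z t.
Proof. by apply: sumr_ge0 => i _; rewrite mulr_ge0 ?p_ge0 ?q_ge0. Qed.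
Lemma AC_le z t : AC z t <= P t.
Proof.
rewrite /P /chan_out; under [X in _ <= X]eq_bigr do rewrite mulrC.
by apply: subsum_le => j; rewrite mulr_ge0 ?p_ge0 ?q_ge0.
Qed.
Lemma kb_ge0 z t : 0 <= kb z t.
Proof.
rewrite /kb; case: ifP => _; first exact: q_ge0.
by rewrite divr_ge0 ?AC_ge0 // sumr_ge0 // => i _; exact: p_ge0.
Qed.
Lemma pC_eq z z' : z' \in C z -> pC z' = pC z.
Proof. by rewrite /pC => /C_eq ->. Qed.
Lemma AC_eq z z' t : z' \in C z -> AC z' t = AC z t.
Proof. by rewrite /AC => /C_eq ->. Qed.
Lemma kb_eq z z' t : p z != 0 -> z' \in C z -> kb z' t = kb z t.
Proof.
move=> pz h; rewrite /kb (negbTE pz) (negbTE (C_supp pz h)).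
by rewrite (AC_eq t h) (pC_eq h).
Qed.

Lemma sumC y : \sum_z (z \in C y)%:R * p z = pC y.
Proof.
rewrite /pC [RHS]big_mkcond; apply: eq_bigr => z _.
by case: (z \in C y); rewrite ?mul1r ?mul0r.
Qed.

Lemma kb_alt z t : p z != 0 ->
  kb z t = \sum_z' ((z' \in C z)%:R * p z' / pC z) * q z' t.
Proof.
move=> pz; rewrite /kb (negbTE pz) /AC big_mkcond /= mulr_suml.
apply: eq_bigr => z' _; case: (z' \in C z); first by rewrite mul1r mulrAC.
by rewrite !mul0r.
Qed.

Lemma kb_channel : is_channel kb.
Proof.
split; first exact: kb_ge0.
move=> z; case pz: (p z == 0); first by rewrite /kb pz; exact: q_sum.
have pz' : p z != 0 by rewrite pz.
have e : forall t, kb z t = \sum_z' ((z' \in C z)%:R * p z' / pC z) * q z' t.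
  by move=> t; apply: kb_alt.
under eq_eseriesr do rewrite e.
rewrite chanE; first last.
- by move=> i; rewrite divr_ge0 ?mulr_ge0 ?p_ge0 ?ler0n // ltW // pC_gt0.
- exact: q_sum.
- exact: q_ge0.
rewrite -mulr_suml sumC divff //.
by rewrite gt_eqF // pC_gt0.
Qed.

Lemma swap t (w : X * Y -> R) :
  (forall z z', p z != 0 -> z' \in C z -> w z' = w z) ->
  \sum_z p z * kb z t * w z = \sum_z p z * q z t * w z.
Proof.
move=> hw.
have e1 : forall z, p z * kb z t * w z =
    \sum_z' (z' \in C z)%:R * p z * p z' * q z' t * w z / pC z.
  move=> z; case pz: (p z == 0).
    rewrite (eqP pz) !mul0r; symmetry; apply: big1 => z' _.
    by rewrite mulr0 !mul0r.
  rewrite kb_alt ?pz // mulr_sumr mulr_suml; apply: eq_bigr => z' _.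
  by rewrite !mulrA; ring.
rewrite (eq_bigr _ (fun z _ => e1 z)) exchange_big /=.
apply: eq_bigr => z' _.
case pz': (p z' == 0).
  rewrite (eqP pz') !mul0r; apply: big1 => z _.
  by rewrite mulr0 !mul0r.
have pz'' : p z' != 0 by rewrite pz'.
transitivity (\sum_z (z \in C z')%:R * p z * (p z' * q z' t * w z' / pC z')).
  apply: eq_bigr => z _; rewrite C_sym.
  case hz: (z' \in C z); last by rewrite !mul0r.
  have hz' : z \in C z' by rewrite C_sym.
  rewrite (hw _ _ pz'' hz') (pC_eq hz'); ring.
rewrite -mulr_suml sumC.
have := pC_gt0 pz''; move=> h; field.
by rewrite gt_eqF.
Qed.

Lemma out_p t : chan_out kb p t = P t.
Proof.
transitivity (\sum_z p z * kb z t * 1).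
  by rewrite /chan_out; apply: eq_bigr => z _; rewrite mulr1 mulrC.
rewrite swap //.
by rewrite /P /chan_out; apply: eq_bigr => z _; rewrite mulr1 mulrC.
Qed.

Lemma decomp (f : X * Y -> R) : \sum_z f z * prodmarg p z =
  \sum_z p z * f z * (prodmarg p z / p z) + \sum_z (p z == 0)%:R * (f z * prodmarg p z).
Proof.
rewrite -big_split; apply: eq_bigr => z _ /=; case pz: (p z == 0).
  by rewrite (eqP pz) !mul0r add0r mul1r.
by rewrite mul0r addr0; field; rewrite pz.
Qed.

Lemma out_m t : chan_out kb (prodmarg p) t = Q t.
Proof.
rewrite /Q /chan_out !decomp swap; last first.
  move=> z z' pz; rewrite inC /pmi_ratio => /eqP h.
  by have := congr1 GRing.inv h; rewrite !invf_div.
congr (_ + _); apply: eq_bigr => z _; rewrite /kb.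
by case pz: (p z == 0); rewrite ?mul0r.
Qed.

Lemma cons_kb : IIB_constraint p kb = IIB_constraint p q.
Proof.
rewrite /IIB_constraint; congr KLnat; apply: funext => t; [exact: out_p | exact: out_m].
Qed.

Hypothesis Hcons : IIB_constraint p q = KLfin p (prodmarg p).
Hypothesis Hmin : forall k, is_channel k ->
  IIB_constraint p k = KLfin p (prodmarg p) -> (MI p q <= MI p k)%E.

Definition u z := klr (p z) (prodmarg p z).

Lemma PQ t : P t != 0 -> Q t != 0.
Proof.
move=> Pn; apply/negP => /eqP Q0; move/eqP: Pn; apply.
have h := psumr_eq0P (P := xpredT) (fun z _ => mulr_ge0 (q_ge0 z t) (ltW (m_gt0 z))) Q0.
rewrite /P /chan_out big1 // => z _.
have := h z isT; move/eqP; rewrite mulf_eq0 (negbTE (m_neq0 z)) orbF => /eqP ->.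
by rewrite mul0r.
Qed.

Lemma dpi_le t : klr (P t) (Q t) <= \sum_z q z t * u z /\
  (klr (P t) (Q t) = \sum_z q z t * u z ->
     forall z, q z t * p z * Q t = P t * (q z t * prodmarg p z)).
Proof.
have := logsum (a := fun z => q z t * p z) (b := fun z => q z t * prodmarg p z).
have e : \sum_z q z t * p z * ln (q z t * p z / (q z t * prodmarg p z)) =
         \sum_z q z t * u z.
  by apply: eq_bigr => z _; rewrite /u -klr_scale.
rewrite e; case.
- by move=> z; rewrite mulr_ge0 ?q_ge0 ?p_ge0.
- by move=> z; rewrite mulr_ge0 ?q_ge0 // ltW // m_gt0.
- move=> z /eqP; rewrite mulf_eq0 (negbTE (m_neq0 z)) orbF => /eqP ->.
  by rewrite mul0r.
by move=> h1 h2; split.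
Qed.

Lemma dpi t : klr (P t) (Q t) = \sum_z q z t * u z.
Proof.
pose al t := \sum_z Num.max (u z) 0 * q z t.
pose be t := \sum_z Num.max (- u z) 0 * q z t.
pose ga t := Num.max (klr (P t) (Q t)) 0.
pose de t := Num.max (- klr (P t) (Q t)) 0.
have alb : forall t, al t - be t = \sum_z q z t * u z.
  by move=> s; rewrite -sumrB; apply: eq_bigr => z _; rewrite -mulrBl maxpos mulrC.
have gd : forall t, ga t - de t = klr (P t) (Q t) by move=> s; exact: maxpos.
have Ecq : IIB_constraint p q =
  (\sum_(t <oo) (ga t)%:E - \sum_(t <oo) (de t)%:E)%E.
  by rewrite -KLnatE //; exact: PQ.
have Efin : KLfin p (prodmarg p) = (\sum_z u z)%:E by rewrite KLfinE //; exact: m_neq0.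
have Sal : (\sum_(t <oo) (al t)%:E)%E = (\sum_z Num.max (u z) 0)%:E.
  by rewrite chanE //; [exact: q_ge0 | exact: q_sum | move=> z; exact: maxpos_ge0].
have Sbe : (\sum_(t <oo) (be t)%:E)%E = (\sum_z Num.max (- u z) 0)%:E.
  by rewrite chanE //; [exact: q_ge0 | exact: q_sum | move=> z; exact: maxpos_ge0].
have ge0 : forall t, 0 <= ga t by move=> s; exact: maxpos_ge0.
have de0 : forall t, 0 <= de t by move=> s; exact: maxpos_ge0.
have [gf df] : (\sum_(t <oo) (ga t)%:E < +oo /\ \sum_(t <oo) (de t)%:E < +oo)%E.
  apply: (fin_diff (x := \sum_z u z)); try exact: ser_ge0.
  by rewrite -Ecq Hcons Efin.
have := key (al := al) (be := be) (ga := ga) (de := de).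
move=> /(_ _ _ ge0 de0) h.
rewrite -gd -alb; apply: h.
- by move=> s; apply: sumr_ge0 => z _; rewrite mulr_ge0 ?q_ge0 ?maxpos_ge0.
- by move=> s; apply: sumr_ge0 => z _; rewrite mulr_ge0 ?q_ge0 ?maxpos_ge0.
- by move=> s; rewrite gd alb; case: (dpi_le s).
- by rewrite Sbe ltry.
- exact: gf.
- exact: df.
- rewrite Sal Sbe -EFinB -sumrB -Ecq Hcons Efin.
  by rewrite le_eqVlt; apply/orP; left; apply/eqP; congr (_%:E); apply: eq_bigr => z _; rewrite maxpos.
Qed.

Lemma dpi_ratio t z1 z2 : 0 < q z1 t -> 0 < q z2 t -> pmi_ratio p z1 = pmi_ratio p z2.
Proof.
have h := (dpi_le t).2 (dpi t).
have r_eq : forall z, 0 < q z t -> pmi_ratio p z = P t / Q t.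
  move=> z qz.
  have Qp : 0 < Q t.
    apply: lt_le_trans (mulr_gt0 qz (m_gt0 z)) _.
    by rewrite /Q /chan_out (bigD1 z) //= lerDl sumr_ge0 // => i _; rewrite mulr_ge0 ?q_ge0 // ltW // m_gt0.
  have qn : q z t != 0 by rewrite gt_eqF.
  have e2 : p z * Q t = P t * prodmarg p z.
    by apply: (mulfI qn); rewrite mulrA h; ring.
  rewrite /pmi_ratio.
  have -> : p z = P t * prodmarg p z / Q t by rewrite -e2 mulfK // gt_eqF.
  have mn := m_neq0 z; have Qn : Q t != 0 by rewrite gt_eqF.
  by field; rewrite Qn mn.
by move=> /r_eq -> /r_eq ->.
Qed.

Lemma Ppos z t : p z * q z t != 0 -> 0 < P t.
Proof.
move=> h; apply: lt_le_trans (_ : 0 < q z t * p z) _.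
  by rewrite lt_neqAle eq_sym mulrC h mulr_ge0 ?q_ge0 ?p_ge0.
by rewrite /P /chan_out (bigD1 z) //= lerDl sumr_ge0 // => i _; rewrite mulr_ge0 ?q_ge0 ?p_ge0.
Qed.

Lemma kb0 z t : p z != 0 -> kb z t = 0 -> q z t = 0.
Proof.
move=> pz; rewrite /kb (negbTE pz) => /eqP; rewrite mulf_eq0 invr_eq0.
rewrite (gt_eqF (pC_gt0 pz)) orbF => /eqP h.
have h0 : forall i, i \in C z -> 0 <= p i * q i t.
  by move=> i _; rewrite mulr_ge0 ?p_ge0 ?q_ge0.
have := psumr_eq0P h0 h (C_self z).
by move=> /eqP; rewrite mulf_eq0 (negbTE pz) /= => /eqP.
Qed.

Lemma kbP z t : p z != 0 -> 0 < kb z t -> 0 < P t.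
Proof.
move=> pz kp; apply: lt_le_trans (AC_le z t).
move: kp; rewrite /kb (negbTE pz) => kp.
rewrite lt_neqAle AC_ge0 andbT eq_sym; apply/eqP => h.
by move: kp; rewrite h mul0r ltxx.
Qed.

Definition G z t := p z * (klr (q z t) (P t) - klr (kb z t) (P t) -
   (q z t - kb z t) * (1 + ln (kb z t / P t))).

Lemma G_ok z t : 0 <= G z t /\ (G z t = 0 -> p z != 0 -> q z t = kb z t).
Proof.
case pz: (p z == 0).
  by rewrite /G (eqP pz) mul0r; split.
have pz' : p z != 0 by rewrite pz.
have [h1 h2] := gap (q_ge0 z t) (kb_ge0 z t) (kb0 pz') (kbP pz').
rewrite /G; split; first by rewrite mulr_ge0 // p_ge0.
move=> /eqP; rewrite mulf_eq0 (negbTE pz') /= => /eqP /h2 ->.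
done.
Qed.

Lemma lin0 t : \sum_z p z * (q z t - kb z t) * (1 + ln (kb z t / P t)) = 0.
Proof.
have e : forall z, p z * (q z t - kb z t) * (1 + ln (kb z t / P t)) =
  p z * q z t * (1 + ln (kb z t / P t)) - p z * kb z t * (1 + ln (kb z t / P t)).
  by move=> z; ring.
rewrite (eq_bigr _ (fun z _ => e z)) sumrB swap ?subrr //.
by move=> z z' pz hz; rewrite (kb_eq t pz hz).
Qed.

Lemma mi_pt t : \sum_z p z * klr (kb z t) (P t) <= \sum_z p z * klr (q z t) (P t) /\
  (\sum_z p z * klr (kb z t) (P t) = \sum_z p z * klr (q z t) (P t) ->
    forall z, p z != 0 -> q z t = kb z t).
Proof.
have e : \sum_z p z * klr (q z t) (P t) - \sum_z p z * klr (kb z t) (P t) =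
         \sum_z G z t.
  have e0 : \sum_z G z t = \sum_z p z * klr (q z t) (P t) - \sum_z p z * klr (kb z t) (P t)
     - \sum_z p z * (q z t - kb z t) * (1 + ln (kb z t / P t)).
    by rewrite -!sumrB; apply: eq_bigr => z _; rewrite /G; ring.
  by rewrite e0 lin0 subr0.
split.
  by rewrite -subr_ge0 e; apply: sumr_ge0 => z _; case: (G_ok z t).
move=> eq z pz; apply: (proj2 (G_ok z t)) => //.
apply: (psumr_eq0P (P := predT) (F := fun j => G j t)) => // [j _|]; first by case: (G_ok j t).
by rewrite -e eq subrr.
Qed.

Lemma posk z t : Num.max (klr (p z * kb z t) (p z * P t)) 0 <= kb z t.
Proof.
rewrite ge_max kb_ge0 andbT klr_scale.
case pz: (p z == 0); first by rewrite (eqP pz) mul0r kb_ge0.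
have pz' : p z != 0 by rewrite pz.
have [ke|kn] := eqVneq (kb z t) 0; first by rewrite ke klr0 mulr0.
have kp : 0 < kb z t by rewrite lt_neqAle eq_sym kn kb_ge0.
have Pp := kbP pz' kp.
have pCp := pC_gt0 pz'.
have xp : 0 < kb z t / P t by rewrite divr_gt0.
have hl := ln_le xp.
have xpc : kb z t / P t * pC z <= 1.
  have -> : kb z t / P t * pC z = AC z t / P t.
    rewrite /kb (negbTE pz'); field.
    by rewrite !gt_eqF.
  by rewrite ler_pdivrMr // mul1r AC_le.
have p0 := p_ge0 z; have ple := pC_ge z.
rewrite /klr.
set x := kb z t / P t in xp hl xpc *.
set k := kb z t in kp xp hl xpc *.
have h1 : k * ln x <= k * (x - 1) by rewrite ler_wpM2l // ltW.
have h2 : p z * x <= 1 by nra.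
nra.
Qed.

Lemma mi t : \sum_z p z * klr (kb z t) (P t) = \sum_z p z * klr (q z t) (P t).
Proof.
pose al t := \sum_z Num.max (klr (p z * q z t) (p z * P t)) 0.
pose be t := \sum_z Num.max (- klr (p z * q z t) (p z * P t)) 0.
pose ga t := \sum_z Num.max (klr (p z * kb z t) (p z * P t)) 0.
pose de t := \sum_z Num.max (- klr (p z * kb z t) (p z * P t)) 0.
have P0 : forall t, 0 <= P t.
  by move=> s; apply: sumr_ge0 => z _; rewrite mulr_ge0 ?q_ge0 ?p_ge0.
have hq : forall z t, p z * q z t != 0 -> p z * P t != 0.
  move=> z s h; rewrite mulf_neq0 //; last by rewrite gt_eqF // (Ppos h).
  by move: h; rewrite mulf_eq0 negb_or => /andP[].
have hk : forall z t, p z * kb z t != 0 -> p z * P t != 0.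
  move=> z s h; move: (h); rewrite mulf_eq0 negb_or => /andP[pz kn].
  rewrite mulf_neq0 // gt_eqF // (kbP pz) //.
  by rewrite lt_neqAle eq_sym kn kb_ge0.
have MIq : MI p q = (\sum_(t <oo) (al t)%:E - \sum_(t <oo) (be t)%:E)%E.
  by rewrite /MI (KLprodE hq).
have MIk : MI p kb = (\sum_(t <oo) (ga t)%:E - \sum_(t <oo) (de t)%:E)%E.
  rewrite /MI.
  have -> : (fun z t => p z * chan_out kb p t) = (fun z t => p z * P t).
    by apply/funext => z; apply/funext => s; rewrite out_p.
  by rewrite (KLprodE hk).
have alb : forall t, al t - be t = \sum_z p z * klr (q z t) (P t).
  by move=> s; rewrite -sumrB; apply: eq_bigr => z _; rewrite maxpos klr_scale.
have gd : forall t, ga t - de t = \sum_z p z * klr (kb z t) (P t).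
  by move=> s; rewrite -sumrB; apply: eq_bigr => z _; rewrite maxpos klr_scale.
rewrite -gd -alb; apply: key.
- by move=> s; apply: sumr_ge0 => z _; exact: maxpos_ge0.
- by move=> s; apply: sumr_ge0 => z _; exact: maxpos_ge0.
- by move=> s; apply: sumr_ge0 => z _; exact: maxpos_ge0.
- by move=> s; apply: sumr_ge0 => z _; exact: maxpos_ge0.
- by move=> s; rewrite gd alb; case: (mi_pt s).
- apply: (chan_bound (k := q) (c := p)).
  + exact: q_ge0.
  + exact: q_sum.
  + exact: p_ge0.
  + by move=> s; apply: sumr_ge0 => z _; exact: maxpos_ge0.
  move=> s; apply: (le_trans (y := \sum_z p z * P s)).
    apply: ler_sum => z _; apply: negklr_le; last exact: hq.
      by rewrite mulr_ge0 ?p_ge0 ?q_ge0.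
    by rewrite mulr_ge0 ?p_ge0.
  by rewrite -mulr_suml p_sum mul1r /P /chan_out le_eqVlt; apply/orP; left; apply/eqP;
    apply: eq_bigr => z _; rewrite mulrC.
- apply: (chan_bound (k := kb) (c := fun _ => 1)).
  + exact: kb_ge0.
  + by case: kb_channel.
  + by move=> _; exact: ler01.
  + by move=> s; apply: sumr_ge0 => z _; exact: maxpos_ge0.
  by move=> s; apply: ler_sum => z _; rewrite mul1r; exact: posk.
- apply: (chan_bound (k := q) (c := p)).
  + exact: q_ge0.
  + exact: q_sum.
  + exact: p_ge0.
  + by move=> s; apply: sumr_ge0 => z _; exact: maxpos_ge0.
  move=> s; apply: (le_trans (y := \sum_z p z * P s)).
    apply: ler_sum => z _; apply: negklr_le; last exact: hk.
      by rewrite mulr_ge0 ?p_ge0 ?kb_ge0.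
    by rewrite mulr_ge0 ?p_ge0.
  by rewrite -mulr_suml p_sum mul1r /P /chan_out le_eqVlt; apply/orP; left; apply/eqP;
    apply: eq_bigr => z _; rewrite mulrC.
rewrite -MIq -MIk; apply: Hmin; first exact: kb_channel.
by rewrite cons_kb Hcons.
Qed.

Lemma q_kb z t : p z != 0 -> q z t = kb z t.
Proof. by move=> pz; apply: (proj2 (mi_pt t)) => //; exact: mi. Qed.

Lemma final z : z \in supp p -> forall t : nat,
  q z t = \sum_(C0 in classes_in_S p) qcond p q (Tq q C0) t * (z \in C0)%:R.
Proof.
move=> zS t; have pz : p z != 0 by rewrite inE in zS.
have Cin : C z \in classes_in_S p.
  rewrite /classes_in_S inE; apply/andP; split.
    by apply: mem_set; exists z.
  by apply/fintype.subsetP => z' hz'; rewrite inE; exact: C_supp hz'.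
rewrite (bigD1 (C z)) //= C_self mulr1 big1 ?addr0; last first.
  move=> C0 /andP[hC0 ne]; case hz: (z \in C0); last by rewrite mulr0.
  exfalso; move: hC0; rewrite inE => /andP[/set_mem [z0 _ E] _].
  rewrite -E in hz ne.
  have := C_eq hz; rewrite /C => E2.
  by move: ne; rewrite /C E2 eqxx.
have key1 : forall s, qT p q s * (s \in Tq q (C z))%:R = AC z s.
  move=> s; case: (boolP (s \in Tq q (C z))) => hs.
    rewrite mulr1; have [z1 hz1 qp] := set_mem hs.
    rewrite /qT (bigID (fun z' => z' \in C z)) /= [X in _ + X]big1 ?addr0 //.
    move=> z' hz'; have : q z' s = 0.
      apply/eqP; rewrite eq_le q_ge0 andbT; apply/negP => /negP; rewrite -ltNge => qp'.
      move/negP: hz'; apply; rewrite inC.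
      by rewrite (dpi_ratio qp' qp); rewrite inC in hz1.
    by move=> ->; rewrite mulr0.
  rewrite mulr0 /AC big1 // => z' hz'.
  have : q z' s = 0.
    apply/eqP; rewrite eq_le q_ge0 andbT; apply/negP => /negP; rewrite -ltNge => qp'.
    by move/negP: hs; apply; apply: mem_set; exists z'.
  by move=> ->; rewrite mulr0.
have qm : qmass p q (Tq q (C z)) = pC z.
  rewrite /qmass.
  under eq_eseriesr do rewrite indicE key1.
  have e : forall s, AC z s = \sum_z' ((z' \in C z)%:R * p z') * q z' s.
    move=> s; rewrite /AC [LHS]big_mkcond; apply: eq_bigr => z' _.
    by case: (z' \in C z); rewrite ?mul1r ?mul0r.
  under eq_eseriesr do rewrite e.
  rewrite chanE //; first by rewrite sumC.
  - exact: q_ge0.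
  - exact: q_sum.
  - by move=> z'; rewrite mulr_ge0 ?ler0n ?p_ge0.
rewrite /qcond indicE qm (q_kb t pz) /kb (negbTE pz) -key1.
by rewrite mulrAC.
Qed.

End Main.

Unset Implicit Arguments.
Set Strict Implicit.

Theorem lemma13 (R : realType) (X Y : finType) (p : X * Y -> R)
  (q : X * Y -> nat -> R) :
  is_distr p ->
  (forall x, 0 < margX p x) -> (forall y, 0 < margY p y) ->
  IIB_solution p (KLfin p (prodmarg p)) q ->
  forall z, z \in supp p -> forall t : nat,
    q z t = \sum_(C in classes_in_S p) qcond p q (Tq q C) t * (z \in C)%:R.
Proof.
move=> Hp HX HY [Hq Hc Hm].
exact: (final Hp HX HY Hq Hc Hm).
Qed.
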